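(* Let $H$ be a complex Hilbert space, let $K \in \mathcal{L}(H)$ be a positive compact operator, and let $\eta$ be a positive real number with $\eta > \|K\|/2$. Then the operator $W := \eta I - K$ satisfies the property $\mathcal{AN}^*$.
   Context: $\mathcal{L}(H)$ is the space of bounded linear operators on $H$; positive means $\langle Kx,x\rangle \ge 0$ for all $x\in H$. For a closed subspace $M \neq \{0\}$ of $H$ and $T \in \mathcal{L}(H)$, write $[T|_M] := \inf\{\|Tx\| : x \in M, \|x\|=1\}$; $T|_M$ satisfies $\mathcal{N}^*$ if there is $x_0 \in M$ with $\|x_0\|=1$ and $\|Tx_0\| = [T|_M]$. $T$ satisfies the property $\mathcal{AN}^*$ if $T|_M$ satisfies $\mathcal{N}^*$ for every closed subspace $M \neq \{0\}$ of $H$. *)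

(* Defs.v *)
From HB Require Import structures.
From mathcomp Require Import all_boot all_order all_algebra.
From mathcomp Require Import all_classical all_reals.
From mathcomp Require Import complex.
Set Implicit Arguments. Unset Strict Implicit. Unset Printing Implicit Defensive.
Import Order.TTheory GRing.Theory Num.Theory.
Local Open Scope ring_scope.
Local Open Scope classical_set_scope.

Section Hilbert.
Variables (R : realType) (H : lmodType R[i]) (ip : H -> H -> R[i]).

Definition hnorm (x : H) : R := Num.sqrt (complex.Re (ip x x)).

Definition is_inner_product : Prop :=
  [/\ (forall (a : R[i]) (x y z : H), ip (a *: x + y) z = a * ip x z + ip y z),
      (forall x y, ip y x = conjc (ip x y)),
      (forall x, 0 <= ip x x) &
      (forall x, ip x x = 0 -> x = 0)].

Definition hcauchy (u : nat -> H) : Prop :=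
  forall e : R, 0 < e -> exists N : nat, forall m n : nat,
    (N <= m)%N -> (N <= n)%N -> hnorm (u m - u n) < e.

Definition hconverges (u : nat -> H) (l : H) : Prop :=
  forall e : R, 0 < e -> exists N : nat, forall n : nat,
    (N <= n)%N -> hnorm (u n - l) < e.

Definition hcomplete : Prop :=
  forall u : nat -> H, hcauchy u -> exists l, hconverges u l.

Definition is_hilbert : Prop := is_inner_product /\ hcomplete.

Definition bounded_linear (T : H -> H) : Prop :=
  (forall (a : R[i]) (x y : H), T (a *: x + y) = a *: T x + T y) /\
  (exists c : R, forall x, hnorm (T x) <= c * hnorm x).

Definition opnorm (T : H -> H) : R :=
  sup [set hnorm (T x) | x in [set x | hnorm x <= 1]].

(* positive operator: <Kx, x> >= 0 (in the order of C, i.e. real and nonnegative) *)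
Definition positive_op (K : H -> H) : Prop := forall x, 0 <= ip (K x) x.

Definition compact_op (K : H -> H) : Prop :=
  forall u : nat -> H, (exists c : R, forall n, hnorm (u n) <= c) ->
  exists (phi : nat -> nat) (l : H),
    (forall n, (phi n < phi n.+1)%N) /\ hconverges (fun n => K (u (phi n))) l.

Definition closed_subspace (M : set H) : Prop :=
  [/\ M 0,
      (forall (a : R[i]) (x y : H), M x -> M y -> M (a *: x + y)) &
      (forall (u : nat -> H) (l : H), (forall n, M (u n)) -> hconverges u l -> M l)].

Definition restr_lower_bound (T : H -> H) (M : set H) : R :=
  inf [set hnorm (T x) | x in [set x | M x /\ hnorm x = 1]].

Definition N_star (T : H -> H) (M : set H) : Prop :=
  exists x0 : H, [/\ M x0, hnorm x0 = 1 & hnorm (T x0) = restr_lower_bound T M].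

Definition AN_star (T : H -> H) : Prop :=
  forall M : set H, closed_subspace M -> M <> [set 0] -> N_star T M.

End Hilbert.

(* Main.v *)
Require Import Defs.
From HB Require Import structures.
From mathcomp Require Import all_boot all_order all_algebra.
From mathcomp Require Import all_classical all_reals.
From mathcomp Require Import complex.
From mathcomp Require Import ring lra.
Import Order.TTheory GRing.Theory Num.Theory.
Set Implicit Arguments. Unset Strict Implicit. Unset Printing Implicit Defensive.
Local Open Scope ring_scope.
Local Open Scope classical_set_scope.
Section Quad.
Variable R : realType.
Lemma quad_disc (a b c : R) : (forall t, 0 <= a + 2*t*b + t^+2 * c) -> 0 <= c -> b^+2 <= a*c.
Proof.
move=> h hc; have ha : 0 <= a by move: (h 0); rewrite expr2; lra.
case: (ltP 0 c) => [cp|c0].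
  have cn : c != 0 by rewrite gt_eqF.
  set u := b / c.
  have hu : b = u * c by rewrite /u mulfVK.
  have := h (- u); rewrite hu => hh; nra.
have c00 : c = 0 by apply/le_anti; rewrite c0 hc.
rewrite c00 mulr0; have [b0|bn] := eqVneq b 0; first by rewrite b0 expr0n.
have := h (- (a + 1) / (2 * b)).
have -> : 2 * (- (a + 1) / (2 * b)) * b = - (a + 1) by field; rewrite bn.
rewrite c00 mulr0 addr0 => hh; lra.
Qed.
End Quad.
Section Forms.
Variables (R : realType) (H : lmodType R[i]).
Definition rs (t : R) (x : H) : H := (t%:C)%C *: x.
Lemma rs1 x : rs 1 x = x. Proof. by rewrite /rs rmorph1 scale1r. Qed.
Lemma rsN1 x : rs (-1) x = - x. Proof. by rewrite /rs rmorphN1 scaleN1r. Qed.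
Lemma rs0 x : rs 0 x = 0. Proof. by rewrite /rs rmorph0 scale0r. Qed.
Lemma rsA s t x : rs s (rs t x) = rs (s * t) x.
Proof. by rewrite /rs scalerA rmorphM. Qed.
Lemma rsD t x y : rs t (x + y) = rs t x + rs t y. Proof. by rewrite /rs scalerDr. Qed.
Lemma rsB t x y : rs t (x - y) = rs t x - rs t y. Proof. by rewrite /rs scalerBr. Qed.
Lemma rsDl s t x : rs (s + t) x = rs s x + rs t x. Proof. by rewrite /rs rmorphD scalerDl. Qed.

Variable f : H -> H -> R.
Hypothesis flin : forall t x y z, f (rs t x + y) z = t * f x z + f y z.
Hypothesis fsym : forall x y, f x y = f y x.

Lemma fD x y z : f (x + y) z = f x z + f y z.
Proof. by rewrite -{1}(rs1 x) flin mul1r. Qed.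
Lemma f0 z : f 0 z = 0.
Proof. have := fD 0 0 z; rewrite addr0 => h; lra. Qed.
Lemma fZ t x z : f (rs t x) z = t * f x z.
Proof. by rewrite -(addr0 (rs t x)) flin f0 addr0. Qed.
Lemma fN x z : f (- x) z = - f x z.
Proof. by rewrite -rsN1 fZ mulN1r. Qed.
Lemma fB x y z : f (x - y) z = f x z - f y z.
Proof. by rewrite fD fN. Qed.
Lemma fDr x y z : f z (x + y) = f z x + f z y.
Proof. by rewrite fsym fD !(fsym z). Qed.
Lemma fZr t x z : f z (rs t x) = t * f z x.
Proof. by rewrite fsym fZ fsym. Qed.
Lemma fBr x y z : f z (x - y) = f z x - f z y.
Proof. by rewrite fsym fB !(fsym z). Qed.
Lemma f0r z : f z 0 = 0.
Proof. by rewrite fsym f0. Qed.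
Lemma fexp x y t : f (x + rs t y) (x + rs t y) = f x x + 2 * t * f x y + t ^+ 2 * f y y.
Proof. rewrite !fD !fDr !fZ !fZr (fsym y x). ring. Qed.
Lemma fexpB x y : f (x - y) (x - y) = f x x - 2 * f x y + f y y.
Proof. rewrite !fB !fBr (fsym y x). ring. Qed.
Lemma fexpD x y : f (x + y) (x + y) = f x x + 2 * f x y + f y y.
Proof. rewrite !fD !fDr (fsym y x). ring. Qed.
Lemma fsq t x : f (rs t x) (rs t x) = t ^+ 2 * f x x.
Proof. rewrite fZ fZr. ring. Qed.

Lemma fCS x y : (forall t, 0 <= f (x + rs t y) (x + rs t y)) -> 0 <= f y y ->
  f x y ^+ 2 <= f x x * f y y.
Proof. move=> h hy; apply: quad_disc => // t; rewrite -fexp; exact: h. Qed.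
End Forms.
Section Hil.
Variables (R : realType) (H : lmodType R[i]) (ip : H -> H -> R[i]).
Hypothesis hip : is_inner_product ip.
Local Notation CRe := (@complex.Re R).
Local Notation CIm := (@complex.Im R).

Lemma ReD (x y : R[i]) : CRe (x + y) = CRe x + CRe y.
Proof. by case: x => a b; case: y => c d. Qed.
Lemma ReM (t : R) (w : R[i]) : CRe (t%:C%C * w) = t * CRe w.
Proof. case: w => a b /=. ring. Qed.
Lemma ReJ (x : R[i]) : CRe (x^*)%C = CRe x.
Proof. by case: x. Qed.

Definition g0 x y := CRe (ip x y).
Definition Nn x := g0 x x.

Lemma g0lin t x y z : g0 (rs t x + y) z = t * g0 x z + g0 y z.
Proof. by case: hip => h1 _ _ _; rewrite /g0 /rs h1 ReD ReM. Qed.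
Lemma g0sym x y : g0 x y = g0 y x.
Proof. by case: hip => _ h2 _ _; rewrite /g0 h2 ReJ. Qed.
Lemma Nn_ge0 x : 0 <= Nn x.
Proof. by case: hip => _ _ h3 _; have := h3 x; rewrite lecE => /andP[]. Qed.
Lemma Nn_eq0 x : Nn x = 0 -> x = 0.
Proof.
case: hip => _ _ h3 h4 hN; apply: h4; have := h3 x; rewrite lecE => /andP[/eqP hi _].
move: hN hi; rewrite /Nn /g0; case: (ip x x) => a b /= -> -> //.
Qed.
Lemma hnormE x : hnorm ip x = Num.sqrt (Nn x). Proof. by []. Qed.
Lemma hnorm_ge0 x : 0 <= hnorm ip x. Proof. exact: sqrtr_ge0. Qed.
Lemma hnorm_sq x : hnorm ip x ^+ 2 = Nn x. Proof. by rewrite hnormE sqr_sqrtr // Nn_ge0. Qed.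
Lemma g0CS x y : g0 x y ^+ 2 <= Nn x * Nn y.
Proof. apply: fCS; [exact: g0lin|exact: g0sym| |exact: Nn_ge0] => t; exact: Nn_ge0. Qed.
Lemma sq_le (a b : R) : a ^+ 2 <= b ^+ 2 -> 0 <= b -> a <= b.
Proof. move=> h hb; nra. Qed.
Lemma g0_le x y : g0 x y <= hnorm ip x * hnorm ip y.
Proof.
apply: sq_le; last by rewrite mulr_ge0 // hnorm_ge0.
by rewrite exprMn !hnorm_sq g0CS.
Qed.
Lemma NnD x y : Nn (x + y) = Nn x + 2 * g0 x y + Nn y.
Proof. apply: fexpD; [exact: g0lin|exact: g0sym]. Qed.
Lemma NnB x y : Nn (x - y) = Nn x - 2 * g0 x y + Nn y.
Proof. apply: fexpB; [exact: g0lin|exact: g0sym]. Qed.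
Lemma Nn_rs t x : Nn (rs t x) = t ^+ 2 * Nn x.
Proof. apply: fsq; [exact: g0lin|exact: g0sym]. Qed.
Lemma hnormD x y : hnorm ip (x + y) <= hnorm ip x + hnorm ip y.
Proof.
apply: sq_le; last by rewrite addr_ge0 // hnorm_ge0.
rewrite hnorm_sq NnD sqrrD !hnorm_sq; have := g0_le x y; lra.
Qed.
Lemma hnorm_rs t x : hnorm ip (rs t x) = `|t| * hnorm ip x.
Proof. by rewrite !hnormE Nn_rs sqrtrM ?sqrtr_sqr // sqr_ge0. Qed.
Lemma hnormN x : hnorm ip (- x) = hnorm ip x.
Proof. by rewrite -rsN1 hnorm_rs normrN normr1 mul1r. Qed.
Lemma hnormB x y : hnorm ip (x - y) = hnorm ip (y - x).
Proof. by rewrite -hnormN opprB. Qed.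
Lemma hnorm0 : hnorm ip 0 = 0.
Proof. by rewrite -(rs0 0) hnorm_rs normr0 mul0r. Qed.
Lemma hnorm_eq1 x : (hnorm ip x = 1) <-> (Nn x = 1).
Proof.
split=> h; first by rewrite -hnorm_sq h expr1n.
by rewrite hnormE h sqrtr1.
Qed.
Lemma NnB_le x y : Nn (x - y) <= 2 * Nn x + 2 * Nn y.
Proof. have := NnD x y; have := NnB x y; have := Nn_ge0 (x + y); lra. Qed.

Lemma ipD1 x y z : ip (x + y) z = ip x z + ip y z.
Proof. by case: hip => h1 _ _ _; rewrite -{1}(scale1r x) h1 mul1r. Qed.
Lemma ip01 z : ip 0 z = 0.
Proof. have := ipD1 0 0 z; rewrite addr0 => h. by have /addrI <- : ip 0 z + 0 = ip 0 z + ip 0 z by rewrite addr0. Qed.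
Lemma ipZ1 a x z : ip (a *: x) z = a * ip x z.
Proof. by case: hip => h1 _ _ _; rewrite -(addr0 (a *: x)) h1 ip01 addr0. Qed.
Lemma ip2 a x y z : ip z (a *: x + y) = (a^*)%C * ip z x + ip z y.
Proof.
case: hip => _ h2 _ _; rewrite h2 ipD1 ipZ1 rmorphD rmorphM /= -!h2 //.
Qed.

Lemma ipD2 x y z : ip z (x + y) = ip z x + ip z y.
Proof. by rewrite -{1}(scale1r x) ip2 rmorph1 mul1r. Qed.
Lemma ipZ2 a x z : ip z (a *: x) = (a^*)%C * ip z x.
Proof. case: hip => _ h2 _ _; by rewrite h2 ipZ1 rmorphM /= -h2. Qed.

Section Op.
Variable K : H -> H.
Hypothesis hKlin : bounded_linear ip K.
Hypothesis hKpos : positive_op ip K.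

Lemma KlinC a x y : K (a *: x + y) = a *: K x + K y.
Proof. by case: hKlin. Qed.
Lemma K0 : K 0 = 0.
Proof. have := KlinC 1 0 0; rewrite !scale1r addr0 => h. by have /addrI <- : K 0 + 0 = K 0 + K 0 by rewrite addr0. Qed.
Lemma KD x y : K (x + y) = K x + K y.
Proof. by rewrite -{1}(scale1r x) KlinC scale1r. Qed.
Lemma KZ a x : K (a *: x) = a *: K x.
Proof. by rewrite -(addr0 (a *: x)) KlinC K0 addr0. Qed.
Lemma KN x : K (- x) = - K x.
Proof. by rewrite -scaleN1r KZ scaleN1r. Qed.
Lemma KB x y : K (x - y) = K x - K y.
Proof. by rewrite KD KN. Qed.
Lemma Krs t x : K (rs t x) = rs t (K x).
Proof. exact: KZ. Qed.

Definition kf x y := g0 (K x) y.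
Lemma kflin t x y z : kf (rs t x + y) z = t * kf x z + kf y z.
Proof. by rewrite /kf KD Krs g0lin. Qed.
Lemma kf_ge0 x : 0 <= kf x x.
Proof. by have := hKpos x; rewrite lecE => /andP[]. Qed.
Lemma Im_ipK x : CIm (ip (K x) x) = 0.
Proof. by have := hKpos x; rewrite lecE => /andP[/eqP ->]. Qed.
Lemma kfsym x y : kf x y = kf y x.
Proof.
have := Im_ipK (x + 'i%C *: y).
rewrite KD KZ ipD1 !ipD2 !ipZ1 !ipZ2.
have := Im_ipK x; have := Im_ipK y; rewrite /kf /g0.
case: (ip (K x) x) => a1 b1; case: (ip (K y) y) => a2 b2.
case: (ip (K x) y) => a3 b3; case: (ip (K y) x) => a4 b4 /= -> ->.
move=> h; lra.
Qed.
Lemma le_eps (a b : R) : (forall e, 0 < e -> a <= b + e) -> a <= b.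
Proof.
move=> h; rewrite leNgt; apply/negP => hab.
have := h ((a - b) / 2); rewrite divr_gt0 ?subr_gt0 // => /(_ isT); lra.
Qed.

Lemma archi_inv (r : R) : 0 < r -> exists N : nat, forall n, (N <= n)%N -> (n.+1%:R)^-1 < r.
Proof.
move=> r0; exists (Num.Def.truncn (r^-1)) => n hn.
have h1 := truncnS_gt (r^-1).
have h2 : (Num.Def.truncn r^-1).+1%:R <= n.+1%:R :> R by rewrite ler_nat ltnS.
have h3 : r^-1 < n.+1%:R by apply: lt_le_trans h2.
rewrite -(invrK r) ltf_pV2 ?posrE ?invr_gt0 //.
Qed.

Definition Kc := opnorm ip K.
Definition Sop := [set hnorm ip (K x) | x in [set x | hnorm ip x <= 1]].

Lemma Sop_ub : has_ubound Sop.
Proof.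
case: hKlin => _ [c0 hc0]; exists (Num.max c0 0) => y [x /= hx <-].
have := hc0 x; have := hnorm_ge0 x.
case: (leP 0 c0) => hc; rewrite ?max_l ?max_r //; try nra.
Qed.

Lemma Kc_ub x : hnorm ip x <= 1 -> hnorm ip (K x) <= Kc.
Proof. move=> hx; apply: (ub_le_sup Sop_ub); by exists x. Qed.

Lemma Kc_ge0 : 0 <= Kc.
Proof. have := Kc_ub (x:=0); rewrite K0 hnorm0 => -> //. Qed.

Lemma hnorm_eq0 x : hnorm ip x = 0 -> x = 0.
Proof.
move=> h; apply: Nn_eq0; by rewrite -hnorm_sq h expr0n.
Qed.

Lemma Kbound y : hnorm ip (K y) <= Kc * hnorm ip y.
Proof.
have [h0|hn] := eqVneq (hnorm ip y) 0.
  by rewrite (hnorm_eq0 h0) K0 hnorm0 mulr0.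
have hp : 0 < hnorm ip y by rewrite lt_def hn hnorm_ge0.
have := Kc_ub (x := rs (hnorm ip y)^-1 y).
rewrite Krs !hnorm_rs ger0_norm ?invr_ge0 ?hnorm_ge0 // mulVf // lexx => /(_ isT).
rewrite -(ler_pM2l hp) mulrA mulfV // mul1r mulrC //.
Qed.

Lemma NKbound x : Nn (K x) <= Kc * kf x x.
Proof.
have cs : kf x (K x) ^+ 2 <= kf x x * kf (K x) (K x).
  apply: fCS; [exact: kflin|exact: kfsym| |exact: kf_ge0] => t; exact: kf_ge0.
have e1 : kf x (K x) = Nn (K x) by [].
have e2 : kf (K x) (K x) <= Kc * Nn (K x).
  rewrite /kf; apply: le_trans (g0_le _ _) _.
  rewrite -hnorm_sq expr2 mulrA ler_wpM2r ?hnorm_ge0 //; exact: Kbound.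
rewrite e1 in cs.
have h : Nn (K x) * Nn (K x) <= (Kc * kf x x) * Nn (K x).
  rewrite -expr2; apply: le_trans cs _; rewrite (mulrC Kc) -mulrA ler_wpM2l ?kf_ge0 //.
have [h0|hp] := eqVneq (Nn (K x)) 0.
  by rewrite h0 mulr_ge0 ?Kc_ge0 ?kf_ge0.
have hp' : 0 < Nn (K x) by rewrite lt_def hp Nn_ge0.
by rewrite -(ler_pM2r hp').
Qed.
Variable eta : R.
Hypothesis heta0 : 0 < eta.
Hypothesis heta : Kc / 2 < eta.

Definition Wf x := rs eta x - K x.
Lemma WB x y : Wf (x - y) = Wf x - Wf y.
Proof.
rewrite /Wf KB /rs scalerBr !opprD !opprK; apply: addrACA.
Qed.
Lemma Wlin t x y : Wf (rs t x + y) = rs t (Wf x) + Wf y.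
Proof.
rewrite /Wf KD Krs rsD rsA mulrC -rsA rsB opprD; apply: addrACA.
Qed.
Lemma NW x : Nn (Wf x) = eta ^+ 2 * Nn x - 2 * eta * kf x x + Nn (K x).
Proof.
rewrite /Wf NnB Nn_rs; congr (_ - _ + _).
by rewrite (fZ g0lin) g0sym mulrA.
Qed.
Lemma NW_le x : Nn (Wf x) <= eta ^+ 2 * Nn x.
Proof.
rewrite NW; have := NKbound x; have hc : Kc <= 2 * eta.
  by move: heta; rewrite ltr_pdivrMr // mulrC => /ltW.
have : Kc * kf x x <= 2 * eta * kf x x by rewrite ler_wpM2r ?kf_ge0.
lra.
Qed.
Lemma hW_le x : hnorm ip (Wf x) <= eta * hnorm ip x.
Proof.
apply: sq_le; last by rewrite mulr_ge0 ?hnorm_ge0 // ltW.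
by rewrite exprMn !hnorm_sq NW_le.
Qed.
Variable M : set H.
Hypothesis hM : closed_subspace ip M.
Hypothesis hM0 : M <> [set 0].

Lemma M0 : M 0. Proof. by case: hM. Qed.
Lemma M_rs t x y : M x -> M y -> M (rs t x + y).
Proof. by case: hM => _ h _; apply: h. Qed.
Lemma M_sc t x : M x -> M (rs t x).
Proof. by move=> hx; rewrite -(addr0 (rs t x)); apply: M_rs => //; exact: M0. Qed.
Lemma M_B x y : M x -> M y -> M (x - y).
Proof. by move=> hx hy; rewrite addrC -rsN1; apply: M_rs. Qed.

Definition Sset := [set x | M x /\ hnorm ip x = 1].
Definition Aset := [set hnorm ip (Wf x) | x in Sset].
Definition m0 := inf Aset.

Lemma normalize x : x <> 0 -> hnorm ip (rs (hnorm ip x)^-1 x) = 1 /\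
  x = rs (hnorm ip x) (rs (hnorm ip x)^-1 x).
Proof.
move=> hx; have hn : hnorm ip x != 0 by apply/eqP => /hnorm_eq0.
split; first by rewrite hnorm_rs ger0_norm ?invr_ge0 ?hnorm_ge0 // mulVf.
by rewrite rsA mulfV // rs1.
Qed.

Lemma exists_unit : exists u, Sset u.
Proof.
case: (pselect (exists x, M x /\ x <> 0)) => [[x [hx hx0]]|hn].
  exists (rs (hnorm ip x)^-1 x); split; first exact: M_sc.
  by case: (normalize hx0).
exfalso; apply: hM0; apply/seteqP; split => y /=.
  move=> My; case: (pselect (y = 0)) => // hy; exfalso; apply: hn; by exists y.
by move=> ->; exact: M0.
Qed.

Lemma A_ne : Aset !=set0.
Proof. by case: exists_unit => u hu; exists (hnorm ip (Wf u)); exists u. Qed.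
Lemma A_lb : has_lbound Aset.
Proof. by exists 0 => _ [x _ <-]; exact: hnorm_ge0. Qed.
Lemma m0_le x : Sset x -> m0 <= hnorm ip (Wf x).
Proof. move=> hx; apply: (ge_inf A_lb); by exists x. Qed.
Lemma m0_ge0 : 0 <= m0.
Proof. apply: lb_le_inf; first exact: A_ne. by move=> _ [x _ <-]; exact: hnorm_ge0. Qed.
Lemma hW_S x : Sset x -> hnorm ip (Wf x) <= eta.
Proof. by case=> _ h1; have := hW_le x; rewrite h1 mulr1. Qed.
Lemma m0_le_eta : m0 <= eta.
Proof. case: exists_unit => u hu; exact: le_trans (m0_le hu) (hW_S hu). Qed.

Definition bf x y := g0 (Wf x) (Wf y) - m0 ^+ 2 * g0 x y.
Lemma bflin t x y z : bf (rs t x + y) z = t * bf x z + bf y z.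
Proof. rewrite /bf Wlin !g0lin. ring. Qed.
Lemma bfsym x y : bf x y = bf y x.
Proof. by rewrite /bf g0sym (g0sym x). Qed.
Lemma bf_ge0 x : M x -> 0 <= bf x x.
Proof.
move=> hx; case: (pselect (x = 0)) => [->|hx0].
  by rewrite (f0 bflin).
case: (normalize hx0) => h1 h2; rewrite h2 (fsq bflin bfsym).
apply: mulr_ge0; first exact: sqr_ge0.
set u := rs _ x.
have hu : Sset u by split; [exact: M_sc|exact: h1].
have := m0_le hu; have := m0_ge0; rewrite /bf.
have -> : g0 u u = 1 by case: hu => _ /hnorm_eq1.
rewrite mulr1 -/(Nn (Wf u)) -hnorm_sq. nra.
Qed.
Lemma bfCS y z : M y -> M z -> bf y z ^+ 2 <= bf y y * bf z z.
Proof.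
move=> hy hz; apply: (fCS bflin bfsym); last exact: bf_ge0.
by move=> t; apply: bf_ge0; rewrite addrC; apply: M_rs.
Qed.
Hypothesis hcompl : hcomplete ip.
Hypothesis hKcomp : compact_op ip K.

Lemma sq_lt (a b : R) : a ^+ 2 < b ^+ 2 -> 0 <= a -> 0 < b -> a < b.
Proof. move=> h ha hb; nra. Qed.
Lemma hnorm_lt x e : Nn x < e ^+ 2 -> 0 < e -> hnorm ip x < e.
Proof. by move=> h he; apply: sq_lt; rewrite ?hnorm_sq ?hnorm_ge0. Qed.
Lemma Nn_lt x e : hnorm ip x < e -> Nn x < e ^+ 2.
Proof. move=> h; rewrite -hnorm_sq; have := hnorm_ge0 x; nra. Qed.
Lemma hnormB_le x y : hnorm ip (x - y) <= hnorm ip x + hnorm ip y.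
Proof. by rewrite -(hnormN y); apply: hnormD. Qed.

Lemma main_lt : m0 < eta -> exists x, Sset x /\ hnorm ip (Wf x) = m0.
Proof.
move=> hlt.
have hxs : forall n : nat, exists x, Sset x /\ hnorm ip (Wf x) < m0 + (n.+1%:R)^-1.
  move=> n; have : inf Aset < m0 + n.+1%:R^-1 by rewrite ltrDl invr_gt0 ltr0n.
  case/(inf_lt A_ne) => _ [x hx <-] h; by exists x.
case: (choice hxs) => xs hxs'.
have hb : exists c : R, forall n, hnorm ip (xs n) <= c.
  by exists 1 => n; case: (hxs' n) => [[_ ->]].
case: (hKcomp hb) => phi [l [hphi hconv]].
have phi_ge : forall n, (n <= phi n)%N.
  elim=> [|n IH] //; exact: leq_ltn_trans IH (hphi n).
set ys := fun n => xs (phi n).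
have S_ys : forall n, Sset (ys n) by move=> n; case: (hxs' (phi n)).
have W_ys : forall n, hnorm ip (Wf (ys n)) < m0 + (n.+1%:R)^-1.
  move=> n; case: (hxs' (phi n)) => _ h; apply: lt_le_trans h _.
  by rewrite lerD2l lef_pV2 ?posrE ?ltr0n // ler_nat ltnS.
have Nys : forall n, Nn (ys n) = 1 by move=> n; case: (S_ys n) => _ /hnorm_eq1.
have Mys : forall n, M (ys n) by move=> n; case: (S_ys n).
have bf_ys : forall n, bf (ys n) (ys n) <= 2 * eta * (n.+1%:R)^-1.
  move=> n; rewrite /bf -/(Nn (ys n)) Nys mulr1 -/(Nn (Wf (ys n))) -hnorm_sq.
  have := W_ys n; have := m0_le (S_ys n); have := hW_S (S_ys n); have := m0_ge0.
  have : 0 < (n.+1%:R : R)^-1 by rewrite invr_gt0 ltr0n.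
  set r := _^-1; set h := hnorm _ _; nra.
have bf_ys0 : forall n, 0 <= bf (ys n) (ys n) by move=> n; exact: bf_ge0.
have hcauchy : hcauchy ip ys.
  move=> e e0.
  set d := eta ^+ 2 - m0 ^+ 2.
  have d0 : 0 < d by rewrite /d; have := m0_ge0; nra.
  set E := e ^+ 2 * d.
  have E0 : 0 < E by rewrite mulr_gt0 // exprn_gt0.
  have [N1 hN1] := archi_inv (r := E / (16 * eta)) (divr_gt0 E0 (mulr_gt0 (ltr0n _ 16) heta0)).
  have [N2 hN2] := hconv (E / (16 * eta)) (divr_gt0 E0 (mulr_gt0 (ltr0n _ 16) heta0)).
  exists (maxn N1 N2) => m n; rewrite !geq_max => /andP[m1 m2] /andP[n1 n2].
  set z := ys m - ys n.
  have Mz : M z by apply: M_B.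
  have Nz4 : Nn z <= 4 by have := NnB_le (ys m) (ys n); rewrite !Nys; lra.
  have s0 : 0 <= bf z z := bf_ge0 Mz.
  have sE : bf z z = bf (ys m) z - bf (ys n) z by rewrite /z (fB bflin).
  have cm := bfCS (Mys m) Mz; have cn := bfCS (Mys n) Mz.
  have hs : bf z z <= 2 * (bf (ys m) (ys m) + bf (ys n) (ys n)).
    have hh : bf z z * bf z z <= (2 * (bf (ys m) (ys m) + bf (ys n) (ys n))) * bf z z.
      have h2 : (bf (ys m) z - bf (ys n) z) ^+ 2 <= 2 * bf (ys m) z ^+ 2 + 2 * bf (ys n) z ^+ 2.
        have := sqr_ge0 (bf (ys m) z + bf (ys n) z); nra.
      rewrite -sE in h2; rewrite -expr2; lra.
    have [s00|sp] := eqVneq (bf z z) 0.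
      by rewrite s00 mulr_ge0 // addr_ge0.
    by rewrite -(ler_pM2r (x := bf z z)) // lt_def sp s0.
  have rm := hN1 m m1; have rn := hN1 n n1.
  have bm := bf_ys m; have bn := bf_ys n.
  have hs2 : bf z z < E / 2.
    have : 2 * eta * (m.+1%:R)^-1 < 2 * eta * (E / (16 * eta)) by rewrite ltr_pM2l // mulr_gt0.
    have : 2 * eta * (n.+1%:R)^-1 < 2 * eta * (E / (16 * eta)) by rewrite ltr_pM2l // mulr_gt0.
    have -> : 2 * eta * (E / (16 * eta)) = E / 8.
      by field; rewrite gt_eqF.
    move: hs bm bn; set a := bf (ys m) (ys m); set b := bf (ys n) (ys n); set s := bf z z.
    set u := 2 * eta / m.+1%:R; set v := 2 * eta / n.+1%:R; set E8 := E / 8.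
    have -> : E / 2 = 4 * E8 by rewrite /E8; field.
    lra.
  have Km := Nn_lt (hN2 m m2); have Kn := Nn_lt (hN2 n n2).
  have NKz : Nn (K z) <= 2 * Nn (K (ys m) - l) + 2 * Nn (K (ys n) - l).
    have -> : K z = (K (ys m) - l) - (K (ys n) - l).
      by rewrite /z KB opprB addrA subrK.
    exact: NnB_le.
  have kcs : kf z z ^+ 2 <= Nn (K z) * Nn z by exact: g0CS.
  have k0 : 0 <= kf z z := kf_ge0 z.
  have NKz0 : 0 <= Nn (K z) := Nn_ge0 _.
  have Nz0 : 0 <= Nn z := Nn_ge0 _.
  have kb : kf z z ^+ 2 < (E / (4 * eta)) ^+ 2.
    have -> : (E / (4 * eta)) ^+ 2 = 16 * (E / (16 * eta)) ^+ 2.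
      by field; rewrite gt_eqF.
    set dd := E / (16 * eta) in Km Kn *.
    have : Nn (K z) * Nn z <= Nn (K z) * 4 by rewrite ler_wpM2l.
    lra.
  have kb2 : kf z z < E / (4 * eta).
    by apply: sq_lt => //; rewrite divr_gt0 // mulr_gt0.
  have kb3 : 2 * eta * kf z z < E / 2.
    have : 2 * eta * kf z z < 2 * eta * (E / (4 * eta)) by rewrite ltr_pM2l // mulr_gt0.
    have -> : 2 * eta * (E / (4 * eta)) = E / 2 by field; rewrite gt_eqF.
    by [].
  have hNW := NW z.
  have hbz : bf z z = Nn (Wf z) - m0 ^+ 2 * Nn z by [].
  have hdz : d * Nn z < d * e ^+ 2.
    rewrite /d; have -> : d * e ^+ 2 = E by rewrite /E mulrC.
    lra.
  apply: hnorm_lt => //; by rewrite -(ltr_pM2l d0).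
case: (hcompl hcauchy) => xst hx.
have Mx : M xst by case: hM => _ _ h; exact: h hx.
have hx1 : hnorm ip xst = 1.
  apply/le_anti/andP; split; apply: le_eps => e e0; have [N hN] := hx e e0;
    have hNN := hN N (leqnn N); have := S_ys N; case=> _ h1.
    have -> : xst = ys N - (ys N - xst) by rewrite opprB addrC subrK.
    have := hnormB_le (ys N) (ys N - xst); lra.
  have : ys N = xst + (ys N - xst) by rewrite addrC subrK.
  move=> eN; have := hnormD xst (ys N - xst); rewrite -eN; lra.
exists xst; split; first by split.
apply/le_anti/andP; split; last exact: m0_le.
apply: le_eps => e e0.
have e20 : 0 < e / 2 by rewrite divr_gt0.
have [N1 hN1] := archi_inv e20.
have [N2 hN2] := hx (e / (2 * eta)) (divr_gt0 e0 (mulr_gt0 (ltr0n _ 2) heta0)).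
set n := maxn N1 N2.
have r1 := hN1 n (leq_maxl _ _); have r2 := hN2 n (leq_maxr _ _).
have hWx : Wf xst = Wf (ys n) - Wf (ys n - xst) by rewrite WB opprB addrC subrK.
have := hnormB_le (Wf (ys n)) (Wf (ys n - xst)); rewrite -hWx => h1.
have h2 := hW_le (ys n - xst).
have h3 := W_ys n.
have h4 : eta * hnorm ip (ys n - xst) <= e / 2.
  have -> : e / 2 = eta * (e / (2 * eta)) by field; rewrite gt_eqF.
  by rewrite ler_pM2l // ltW.
have h3' : hnorm ip (Wf (ys n)) < m0 + e / 2 by apply: lt_trans h3 _; rewrite ltrD2l.
apply: le_trans h1 _; apply: le_trans (lerD (ltW h3') (le_trans h2 h4)) _.
by rewrite -addrA -splitr.
Qed.
Lemma main_exists : exists x, Sset x /\ hnorm ip (Wf x) = m0.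
Proof.
have [hlt|heq] := ltP m0 eta; first exact: main_lt.
have e : m0 = eta by apply/le_anti; rewrite heq m0_le_eta.
case: exists_unit => u hu; exists u; split => //.
by apply/le_anti; rewrite m0_le // andbT e hW_S.
Qed.
End Op.
End Hil.

Theorem lemma3p11 (R : realType) (H : lmodType R[i]) (ip : H -> H -> R[i])
  (hH : is_hilbert ip) (K : H -> H)
  (hKlin : bounded_linear ip K) (hKpos : positive_op ip K) (hKcomp : compact_op ip K)
  (eta : R) (heta0 : 0 < eta) (heta : opnorm ip K / 2 < eta) :
  AN_star ip (fun x => (eta%:C)%C *: x - K x).
Proof.
move=> M hM hM0.
case: hH => hip hcompl.
have [x [[Mx hx1] hxW]] := @main_exists R H ip hip K hKlin hKpos eta heta0 heta M hM hM0 hcompl hKcomp.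
by exists x; split.
Qed.
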